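(* Let $K$ be a simplicial complex on the vertex set $[m]$. If $K_{I\cup J}=\partial\Delta^I*\partial\Delta^J$ for some non-empty $I,J\subset[m]$ with $I\cap J=\emptyset$, then $K$ is not Golod, i.e. $\Bbbk[K]$ is not Golod for any commutative ring $\Bbbk$.
   Context: $K_S=\{\sigma\in K\mid\sigma\subset S\}$ is the full subcomplex on $S$; $\Delta^S$ is the full simplex on a finite set $S$, $\partial\Delta^S$ its boundary (all proper subsets of $S$), and $*$ is the join. The Stanley–Reisner ring is $\Bbbk[K]=\Bbbk[v_1,\ldots,v_m]/(v_I\mid I\notin K)$, $|v_i|=2$, $v_I=\prod_{i\in I}v_i$; it is Golod if all products and (higher) Massey products in the positive-degree part of $\mathrm{Tor}_{\Bbbk[v_1,\ldots,v_m]}(\Bbbk[K],\Bbbk)$ are trivial, with these operations induced from the Koszul resolution of $\Bbbk$ tensored with $\Bbbk[K]$. *)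

(* Defs.v *)
From HB Require Import structures.
From mathcomp Require Import all_boot all_order all_algebra.
From mathcomp Require Import mpoly.
Set Implicit Arguments. Unset Strict Implicit. Unset Printing Implicit Defensive.
Import Order.TTheory GRing.Theory.
Local Open Scope ring_scope.

(* A simplicial complex on [m]: a family of subsets of [m] closed under
   taking subsets (ghost vertices allowed, as usual). *)
Definition simplicial_complex (m : nat) (K : {set {set 'I_m}}) : Prop :=
  forall s t : {set 'I_m}, t \subset s -> s \in K -> t \in K.

Definition full_sub (m : nat) (K : {set {set 'I_m}}) (S : {set 'I_m}) :
  {set {set 'I_m}} := [set s in K | s \subset S].

Definition bdry_simplex (m : nat) (S : {set 'I_m}) : {set {set 'I_m}} :=
  [set s : {set 'I_m} | s \proper S].

Definition sc_join (m : nat) (K1 K2 : {set {set 'I_m}}) : {set {set 'I_m}} :=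
  [set s :|: t | s in K1, t in K2].

(* An element is a finite function J |-> p_J, meaning  sum_J u_J * p_J,
   where u_J = u_{j1} ... u_{jr} (j1 < ... < jr) and p_J is a polynomial in
   v_1..v_m.  Elements of k[K] are represented by their unique "reduced"
   representatives: polynomials all of whose monomials have support a face
   of K (the Stanley-Reisner ideal is spanned by the other monomials). *)

Section Koszul.
Variables (m : nat) (k : comNzRingType) (K : {set {set 'I_m}}).

Definition KT := {ffun {set 'I_m} -> {mpoly k[m]}}.

Definition mono_supp (mo : 'X_{1..m}) : {set 'I_m} := [set i | mo i != 0%N].

Definition red_poly (p : {mpoly k[m]}) : {mpoly k[m]} :=
  \sum_(mo <- msupp p | mono_supp mo \in K) p@_mo *: 'X_[mo].

Definition kred (x : KT) : KT := [ffun J : {set 'I_m} => red_poly (x J)].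

Definition kreduced (x : KT) : Prop := kred x = x.

(* u_{J1} u_{J2} = ksgn J1 J2 * u_{J1 :|: J2} for disjoint J1, J2 *)
Definition ksgn (J1 J2 : {set 'I_m}) : k :=
  (-1) ^+ #|[set ab : 'I_m * 'I_m | [&& ab.1 \in J1, ab.2 \in J2 & (ab.2 < ab.1)%N]]|.

Definition kmul (x y : KT) : KT :=
  kred [ffun J : {set 'I_m} => \sum_(J1 : {set 'I_m}) \sum_(J2 : {set 'I_m} |
            [disjoint J1 & J2] && (J1 :|: J2 == J)) ksgn J1 J2 *: (x J1 * y J2)].

(* Koszul differential: d u_i = v_i, d v_i = 0, graded Leibniz rule *)
Definition kd (x : KT) : KT :=
  kred [ffun L : {set 'I_m} => \sum_(j : 'I_m | j \notin L)
            ((-1) ^+ #|[set i in L | (i < j)%N]|) *: ('X_j * x (j |: L))].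

(* total degree: deg u_i = 1 (bidegree (-1,2)), deg v_i = 2 (bidegree (0,2)) *)
Definition khomog (n : nat) (x : KT) : Prop :=
  forall (J : {set 'I_m}) (mo : 'X_{1..m}), mo \in msupp (x J) ->
    (#|J| + 2 * mdeg mo)%N = n.

(* \bar x = (-1)^{1 + deg x} x, extended additively (parity of deg = #|J|) *)
Definition kbar (x : KT) : KT := [ffun J : {set 'I_m} => ((-1) ^+ (#|J|.+1)) *: x J].

Definition kboundary (x : KT) : Prop := exists y : KT, kreduced y /\ x = kd y.

(* Degree of the entry a_{ij} of a defining system (0-based indices). *)
Definition dsdeg (deg : nat -> nat) (i j : nat) : nat :=
  ((\sum_(i <= l < j.+1) deg l) - (j - i))%N.

(* a : nat -> nat -> KT is a defining system (May's convention, 0-based)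
   for the n-fold Massey product of the classes of the cycles a i i
   (i < n), homogeneous of positive degrees deg i. *)
Definition defining_system (n : nat) (deg : nat -> nat) (a : nat -> nat -> KT) : Prop :=
  (forall i, (i < n)%N -> (0 < deg i)%N /\ kd (a i i) = 0) /\
  (forall i j, (i <= j)%N -> (j < n)%N -> (i, j) <> (0%N, n.-1) ->
     [/\ kreduced (a i j), khomog (dsdeg deg i j) (a i j) &
         ((i < j)%N -> kd (a i j) = \sum_(i <= l < j) kmul (kbar (a i l)) (a l.+1 j))]).

Definition massey_value (n : nat) (a : nat -> nat -> KT) : KT :=
  \sum_(0 <= l < n.-1) kmul (kbar (a 0%N l)) (a l.+1 n.-1).

(* k[K] is Golod: every product and higher Massey product <a_1,...,a_n>
   (n >= 2) of positive-degree classes in Tor(k[K],k) = H(Koszul dga) is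
   trivial, i.e. whenever it is defined it contains 0. *)
Definition golod : Prop :=
  forall (n : nat) (deg : nat -> nat) (a : nat -> nat -> KT),
    (2 <= n)%N -> defining_system n deg a ->
    exists b : nat -> nat -> KT,
      [/\ defining_system n deg b,
          (forall i, (i < n)%N -> kboundary (b i i - a i i)) &
          kboundary (massey_value n b)].

End Koszul.

(* Main.v *)
Require Import Defs.
From HB Require Import structures.
From mathcomp Require Import all_boot all_order all_algebra.
From mathcomp Require Import mpoly.
Set Implicit Arguments. Unset Strict Implicit. Unset Printing Implicit Defensive.
Import Order.TTheory GRing.Theory.
Local Open Scope ring_scope.

Lemma sum_if_eq (V : nmodType) (T : finType) (P : pred T) (B : T) (F : T -> V) :
  \sum_(x | P x) (if x == B then F x else 0) = if P B then F B else 0.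
Proof.
rewrite -big_mkcondr; case: ifP => PB.
  rewrite (eq_bigl (pred1 B)) ?big_pred1_eq // => x /=.
  by case: eqP => [->|]; rewrite ?andbT ?andbF.
rewrite big_pred0 // => x; case: eqP => [->|]; rewrite ?andbT ?andbF //.
Qed.

Lemma sign_odd (k : pzRingType) a b : odd a = odd b -> (-1) ^+ a = (-1) ^+ b :> k.
Proof. by move=> h; rewrite -signr_odd h signr_odd. Qed.

Section Alg.
Variables (m : nat) (k : comNzRingType).
Local Notation KT := (KT m k).
Implicit Types (x y z : KT) (A B C L : {set 'I_m}) (p q r : {mpoly k[m]}).

Definition cnt A B := #|[set ab : 'I_m * 'I_m | [&& ab.1 \in A, ab.2 \in B & (ab.2 < ab.1)%N]]|.

Lemma ksgnE A B : ksgn k A B = (-1) ^+ cnt A B.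
Proof. by []. Qed.

Lemma cntUl A A' B : [disjoint A & A'] -> cnt (A :|: A') B = (cnt A B + cnt A' B)%N.
Proof.
move=> dA; rewrite /cnt -cardsUI.
have -> : [set ab : 'I_m * 'I_m | [&& ab.1 \in A, ab.2 \in B & (ab.2 < ab.1)%N]] :&:
  [set ab : 'I_m * 'I_m | [&& ab.1 \in A', ab.2 \in B & (ab.2 < ab.1)%N]] = set0.
  apply/setP => ab; rewrite !inE; apply/negbTE.
  apply/negP => /andP [/and3P [h1 _ _] /and3P [h2 _ _]].
  by rewrite (disjointFr dA h1) in h2.
rewrite cards0 addn0; apply: eq_card => ab; rewrite !inE.
by rewrite andb_orl.
Qed.

Lemma cntUr A B B' : [disjoint B & B'] -> cnt A (B :|: B') = (cnt A B + cnt A B')%N.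
Proof.
move=> dB; rewrite /cnt -cardsUI.
have -> : [set ab : 'I_m * 'I_m | [&& ab.1 \in A, ab.2 \in B & (ab.2 < ab.1)%N]] :&:
  [set ab : 'I_m * 'I_m | [&& ab.1 \in A, ab.2 \in B' & (ab.2 < ab.1)%N]] = set0.
  apply/setP => ab; rewrite !inE; apply/negbTE.
  apply/negP => /andP [/and3P [_ h1 _] /and3P [_ h2 _]].
  by rewrite (disjointFr dB h1) in h2.
rewrite cards0 addn0; apply: eq_card => ab; rewrite !inE.
by case: (_ \in A); rewrite /= ?andb_orl.
Qed.

Lemma cnt1l (j : 'I_m) A : cnt [set j] A = #|[set i in A | (i < j)%N]|.
Proof.
have inj : injective (@pair 'I_m 'I_m j) by move=> b b' [->].
rewrite /cnt -(card_imset _ inj); apply: eq_card => [[a b]]; rewrite !inE /=; apply/and3P/imsetP.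
  by case=> /eqP -> hb hl; exists b; rewrite // inE hb.
by case=> b'; rewrite inE => /andP [h1 h2] [-> ->]; split.
Qed.

Lemma cnt1r (j : 'I_m) A : cnt A [set j] = #|[set i in A | (j < i)%N]|.
Proof.
have inj : injective (fun a : 'I_m => (a, j)) by move=> b b' [->].
rewrite /cnt -(card_imset _ inj); apply: eq_card => [[a b]]; rewrite !inE /=; apply/and3P/imsetP.
  by case=> ha /eqP -> hl; exists a; rewrite // inE ha.
by case=> a'; rewrite inE => /andP [h1 h2] [-> ->]; split.
Qed.

Lemma cnt1lr (j : 'I_m) A : j \notin A -> (cnt [set j] A + cnt A [set j])%N = #|A|.
Proof.
move=> jA; rewrite cnt1l cnt1r -cardsUI.
have -> : [set i in A | (i < j)%N] :&: [set i in A | (j < i)%N] = set0.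
  apply/setP => i; rewrite !inE; apply/negbTE; apply/negP.
  by case/andP=> /andP [_ h1] /andP [_ h2]; move: (ltn_trans h1 h2); rewrite ltnn.
rewrite cards0 addn0; apply: eq_card => i; rewrite !inE.
case iA: (i \in A) => //=; case: (ltngtP i j) => //= e.
by move: jA; rewrite -(val_inj e) iA.
Qed.

Definition sg A (j : 'I_m) : k := (-1) ^+ #|[set i in A | (i < j)%N]|.
Lemma sgE A j : sg A j = (-1) ^+ cnt [set j] A.
Proof. by rewrite cnt1l. Qed.

Definition single A p : KT := [ffun L : {set 'I_m} => if L == A then p else 0].
Definition kpar x : KT := [ffun J : {set 'I_m} => (-1) ^+ #|J| *: x J].
Definition kd0 x : KT := [ffun L : {set 'I_m} => \sum_(j : 'I_m | j \notin L)
            ((-1) ^+ #|[set i in L | (i < j)%N]|) *: ('X_j * x (j |: L))].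
Definition kmul0 x y : KT := [ffun J : {set 'I_m} => \sum_(J1 : {set 'I_m}) \sum_(J2 : {set 'I_m} |
            [disjoint J1 & J2] && (J1 :|: J2 == J)) ksgn k J1 J2 *: (x J1 * y J2)].

Lemma single_decomp x : x = \sum_A single A (x A).
Proof.
apply/ffunP => L; rewrite sum_ffunE (bigD1 L) //= ffunE eqxx big1 ?addr0 //.
by move=> A /negbTE nA; rewrite ffunE eq_sym nA.
Qed.

Lemma kd0D x y : kd0 (x + y) = kd0 x + kd0 y.
Proof.
apply/ffunP => L; rewrite !ffunE -big_split /=; apply: eq_bigr => j _.
by rewrite ffunE mulrDr scalerDr.
Qed.
Lemma kd0Z c x : kd0 (c *: x) = c *: kd0 x.
Proof.
apply/ffunP => L; rewrite !ffunE scaler_sumr; apply: eq_bigr => j _.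
by rewrite ffunE -scalerAr !scalerA mulrC.
Qed.
Lemma kd0_0 : kd0 0 = 0.
Proof. by apply/ffunP => L; rewrite !ffunE big1 // => j _; rewrite ffunE mulr0 scaler0. Qed.
Lemma kd0_sum (I : finType) (F : I -> KT) : kd0 (\sum_i F i) = \sum_i kd0 (F i).
Proof. exact: (big_morph kd0 kd0D kd0_0). Qed.

Lemma kmul0Dl x y z : kmul0 (x + y) z = kmul0 x z + kmul0 y z.
Proof.
apply/ffunP => L; rewrite !ffunE -big_split /=; apply: eq_bigr => J1 _.
rewrite -big_split /=; apply: eq_bigr => J2 _.
by rewrite ffunE mulrDl scalerDr.
Qed.
Lemma kmul0Dr x y z : kmul0 x (y + z) = kmul0 x y + kmul0 x z.
Proof.
apply/ffunP => L; rewrite !ffunE -big_split /=; apply: eq_bigr => J1 _.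
rewrite -big_split /=; apply: eq_bigr => J2 _.
by rewrite ffunE mulrDr scalerDr.
Qed.
Lemma kmul0Zl c x y : kmul0 (c *: x) y = c *: kmul0 x y.
Proof.
apply/ffunP => L; rewrite !ffunE scaler_sumr; apply: eq_bigr => J1 _.
rewrite scaler_sumr; apply: eq_bigr => J2 _.
by rewrite ffunE -scalerAl !scalerA mulrC.
Qed.
Lemma kmul0Zr c x y : kmul0 x (c *: y) = c *: kmul0 x y.
Proof.
apply/ffunP => L; rewrite !ffunE scaler_sumr; apply: eq_bigr => J1 _.
rewrite scaler_sumr; apply: eq_bigr => J2 _.
by rewrite ffunE -scalerAr !scalerA mulrC.
Qed.
Lemma kmul0_0l y : kmul0 0 y = 0.
Proof. by apply/ffunP => L; rewrite !ffunE big1 // => J1 _; rewrite big1 // => J2 _; rewrite ffunE mul0r scaler0. Qed.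
Lemma kmul0_0r x : kmul0 x 0 = 0.
Proof. by apply/ffunP => L; rewrite !ffunE big1 // => J1 _; rewrite big1 // => J2 _; rewrite ffunE mulr0 scaler0. Qed.
Lemma kmul0_suml (I : finType) (P : pred I) (F : I -> KT) y : kmul0 (\sum_(i | P i) F i) y = \sum_(i | P i) kmul0 (F i) y.
Proof. exact: (big_morph (kmul0^~ y) (fun a b => kmul0Dl a b y) (kmul0_0l y)). Qed.
Lemma kmul0_sumr (I : finType) (P : pred I) (F : I -> KT) x : kmul0 x (\sum_(i | P i) F i) = \sum_(i | P i) kmul0 x (F i).
Proof. exact: (big_morph (kmul0 x) (kmul0Dr x) (kmul0_0r x)). Qed.

Lemma kparD x y : kpar (x + y) = kpar x + kpar y.
Proof. by apply/ffunP => L; rewrite !ffunE scalerDr. Qed.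
Lemma kpar0 : kpar 0 = 0.
Proof. by apply/ffunP => L; rewrite !ffunE scaler0. Qed.
Lemma kpar_sum (I : finType) (F : I -> KT) : kpar (\sum_i F i) = \sum_i kpar (F i).
Proof. exact: (big_morph kpar kparD kpar0). Qed.
Lemma kparK x : kpar (kpar x) = x.
Proof. by apply/ffunP => L; rewrite !ffunE scalerA -expr2 sqrr_sign ?scale1r // -signr_odd sqrr_sign. Qed.


Ltac parity := rewrite -?exprD; apply: sign_odd; rewrite ?oddD;
  repeat (match goal with |- context[odd ?n] => case: (odd n) end); done.

Lemma kmul0_single A B p q : kmul0 (single A p) (single B q) =
  if [disjoint A & B] then ksgn k A B *: single (A :|: B) (p * q) else 0.
Proof.
apply/ffunP => J; rewrite !ffunE (bigD1 A) //= [X in _ + X]big1 ?addr0; last first.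
  move=> J1 /negbTE nJ1; rewrite big1 // => J2 _.
  by rewrite !ffunE nJ1 mul0r scaler0.
rewrite (eq_bigr (fun J2 => if J2 == B then ksgn k A J2 *: (p * q) else 0)); last first.
  by move=> J2 _; rewrite !ffunE eqxx; case: (J2 == B); rewrite ?mulr0 ?scaler0.
rewrite sum_if_eq; case dAB: [disjoint A & B] => /=; rewrite ?ffunE // eq_sym.
by case: (J == A :|: B); rewrite ?scaler0.
Qed.

Lemma kd0_single C r : kd0 (single C r) =
  \sum_(j in C) sg (C :\ j) j *: single (C :\ j) ('X_j * r).
Proof.
apply/ffunP => L; rewrite !ffunE sum_ffunE big_mkcond [RHS]big_mkcond /=.
apply: eq_bigr => j _; rewrite !ffunE.
case jL: (j \in L) => /=.
  case jC: (j \in C) => //; case e2: (L == C :\ j); rewrite ?scaler0 //.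
  by move: jL; rewrite (eqP e2) setD11.
case e1: (j |: L == C).
  by rewrite -(eqP e1) setU11 setU1K ?jL // eqxx.
case jC: (j \in C); rewrite ?mulr0 ?scaler0 //; case e2: (L == C :\ j); rewrite ?scaler0 //.
by move: e1; rewrite (eqP e2) setD1K ?eqxx.
Qed.


Lemma kpar_single A p : kpar (single A p) = (-1) ^+ #|A| *: single A p.
Proof.
apply/ffunP => L; rewrite !ffunE.
by case: eqP => [->|_]; rewrite ?scaler0.
Qed.

Lemma disjF (x : 'I_m) A B : x \in A -> x \in B -> [disjoint A & B] = false.
Proof. by move=> xA xB; apply/negbTE/negP => d; rewrite (disjointFr d xA) in xB. Qed.

Lemma setD1_id (j : 'I_m) B : j \notin B -> B :\ j = B.
Proof. by move=> jB; apply/setP => x; rewrite !inE; case: eqP => // ->; rewrite (negbTE jB). Qed.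

Lemma d1D (j : 'I_m) A : [disjoint [set j] & A :\ j].
Proof. by rewrite disjoints1 setD11. Qed.

Lemma sgn_a A B j : j \in A -> [disjoint A & B] ->
  ksgn k A B * sg ((A :\ j) :|: B) j = sg (A :\ j) j * ksgn k (A :\ j) B.
Proof.
move=> jA dAB.
have dA'B : [disjoint A :\ j & B] by apply: disjointWl dAB; apply: subsetDl.
have -> : ksgn k A B = ksgn k ([set j] :|: A :\ j) B by rewrite setD1K.
rewrite !ksgnE !sgE cntUl ?d1D // cntUr //.
parity.
Qed.

Lemma sgn_b A B j : j \in B -> [disjoint A & B] ->
  ksgn k A B * sg (A :|: (B :\ j)) j = (-1) ^+ #|A| * (sg (B :\ j) j * ksgn k A (B :\ j)).
Proof.
move=> jB dAB.
have dAB' : [disjoint A & B :\ j] by apply: disjointWr dAB; apply: subsetDl.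
have jA : j \notin A by rewrite (disjointFl dAB jB).
have -> : ksgn k A B = ksgn k A ([set j] :|: B :\ j) by rewrite setD1K.
rewrite !ksgnE !sgE cntUr ?d1D // cntUr // -(cnt1lr jA).
parity.
Qed.

Lemma sgn_c A B j : j \in A -> j \in B -> [disjoint A :\ j & B] ->
  sg (A :\ j) j * ksgn k (A :\ j) B + (-1) ^+ #|A| * (sg (B :\ j) j * ksgn k A (B :\ j)) = 0.
Proof.
move=> jA jB d.
have d' : [disjoint A :\ j & B :\ j] by apply: disjointWr d; apply: subsetDl.
have -> : ksgn k (A :\ j) B = ksgn k (A :\ j) ([set j] :|: B :\ j) by rewrite setD1K.
have -> : ksgn k A (B :\ j) = ksgn k ([set j] :|: A :\ j) (B :\ j) by rewrite setD1K.
rewrite (cardsD1 j A) jA -(@cnt1lr j (A :\ j)) ?setD11 //.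
rewrite !ksgnE !sgE cntUr ?d1D // cntUl ?d1D // -!exprD.
match goal with |- (-1) ^+ ?a + (-1) ^+ ?b = 0 =>
  rewrite (@sign_odd _ b a.+1) ?exprS ?mulN1r ?addrN //; rewrite /= ?oddD end.
move: (odd (cnt [set j] (A :\ j))) (odd (cnt (A :\ j) [set j])) (odd (cnt [set j] (B :\ j))) (odd (cnt (A :\ j) (B :\ j))).
by do 4 case.
Qed.


Lemma leib_single A B p q : kd0 (kmul0 (single A p) (single B q)) =
  kmul0 (kd0 (single A p)) (single B q) + kmul0 (kpar (single A p)) (kd0 (single B q)).
Proof.
rewrite kmul0_single kpar_single [kd0 (single A p)]kd0_single [kd0 (single B q)]kd0_single.
rewrite kmul0_suml kmul0Zl kmul0_sumr.
under eq_bigr do rewrite kmul0Zl kmul0_single.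
under [X in _ + _ *: X]eq_bigr do rewrite kmul0Zr kmul0_single.
case: (boolP [disjoint A & B]) => dAB.
  rewrite kd0Z kd0_single [\sum_(j in A :|: B) _](eq_bigl [predU A & B]); last first.
    by move=> j; rewrite !inE.
  rewrite bigU // scalerDr !scaler_sumr; congr (_ + _).
    apply: eq_bigr => j jA.
    have dA'B : [disjoint A :\ j & B] by apply: disjointWl dAB; apply: subsetDl.
    have jB : j \notin B by rewrite (disjointFr dAB jA).
    have -> : (A :|: B) :\ j = (A :\ j) :|: B by rewrite setDUl (setD1_id jB).
    by rewrite dA'B !scalerA sgn_a // mulrA.
  apply: eq_bigr => j jB.
  have dAB' : [disjoint A & B :\ j] by apply: disjointWr dAB; apply: subsetDl.
  have jA : j \notin A by rewrite (disjointFl dAB jB).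
  have -> : (A :|: B) :\ j = A :|: (B :\ j) by rewrite setDUl (setD1_id jA).
  have -> : 'X_j * (p * q) = p * ('X_j * q) by rewrite mulrCA.
  rewrite dAB' !scalerA sgn_b //.
  by rewrite !mulrA.
have [j0 j0AB] : exists j0, j0 \in A :&: B.
  by apply/set0Pn; rewrite setI_eq0.
move: j0AB; rewrite inE => /andP [j0A j0B].
rewrite kd0_0 (bigD1 j0) //= big1 ?addr0; last first.
  move=> j /andP [jA nj]; rewrite (@disjF j0) ?scaler0 //.
  by rewrite !inE eq_sym nj.
rewrite (bigD1 j0) //= big1 ?addr0; last first.
  move=> j /andP [jB nj]; rewrite (@disjF j0) ?scaler0 ?scaler0 //.
  by rewrite !inE eq_sym nj.
have -> : [disjoint A & B :\ j0] = [disjoint A :\ j0 & B].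
  by rewrite -!setI_eq0 setIDA setIDAC.
case: (boolP [disjoint A :\ j0 & B]) => d; last by rewrite !scaler0 addr0.
have -> : A :|: B :\ j0 = A :\ j0 :|: B.
  apply/setP => x; rewrite !inE; case: (eqVneq x j0) => [->|]; rewrite ?j0A ?j0B //.
have -> : p * ('X_j0 * q) = 'X_j0 * p * q by rewrite mulrCA mulrA.
rewrite !scalerA -scalerDl -[((-1) ^+ #|A| * _) * _]mulrA sgn_c // scale0r //.
Qed.

Lemma leib0 x y : kd0 (kmul0 x y) = kmul0 (kd0 x) y + kmul0 (kpar x) (kd0 y).
Proof.
rewrite [x]single_decomp [y]single_decomp.
rewrite kmul0_suml !kd0_sum kpar_sum !kmul0_suml -big_split /=; apply: eq_bigr => A _.
rewrite kmul0_sumr !kd0_sum !kmul0_sumr -big_split /=; apply: eq_bigr => B _.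
exact: leib_single.
Qed.

End Alg.

Section Red.
Variables (m : nat) (k : comNzRingType) (K : {set {set 'I_m}}).
Hypothesis HK : simplicial_complex K.
Local Notation KT := (KT m k).
Implicit Types (x y z : KT) (A B C L : {set 'I_m}) (p q r : {mpoly k[m]}).
Local Notation red := (red_poly K).

Lemma red_coef p mo : (red p)@_mo = if mono_supp mo \in K then p@_mo else 0.
Proof.
rewrite /red_poly (big_morph (mcoeff mo) (@mcoeffD _ _ mo) (@mcoeff0 _ _ mo)) big_mkcond /=.
case: (boolP (mo \in msupp p)) => h.
  rewrite (bigD1_seq mo) ?msupp_uniq //= big1 ?addr0.
    by case: ifP => _; rewrite ?mcoeffZ ?mcoeffX ?eqxx ?mulr1.
  move=> mo' ne; case: ifP => _ //.
  by rewrite mcoeffZ mcoeffX (negbTE ne) mulr0.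
rewrite big1_seq; first by case: ifP; rewrite // memN_msupp_eq0.
move=> mo' h'; case: ifP => _ //; rewrite mcoeffZ mcoeffX.
have : mo' != mo by apply: contraNneq h => <-.
by move/negbTE->; rewrite mulr0.
Qed.

Lemma redD p q : red (p + q) = red p + red q.
Proof. by apply/mpolyP => mo; rewrite mcoeffD !red_coef mcoeffD; case: ifP; rewrite ?addr0. Qed.
Lemma red0 : red (0 : {mpoly k[m]}) = 0.
Proof. by apply/mpolyP => mo; rewrite red_coef mcoeff0; case: ifP. Qed.
Lemma redZ c p : red (c *: p) = c *: red p.
Proof. by apply/mpolyP => mo; rewrite mcoeffZ !red_coef mcoeffZ; case: ifP; rewrite ?mulr0. Qed.
Lemma redN p : red (- p) = - red p.
Proof. by rewrite -scaleN1r redZ scaleN1r. Qed.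
Lemma red_sum (I : finType) (P : pred I) (F : I -> {mpoly k[m]}) :
  red (\sum_(i | P i) F i) = \sum_(i | P i) red (F i).
Proof. exact: (big_morph red redD red0). Qed.
Lemma red_red p : red (red p) = red p.
Proof. by apply/mpolyP => mo; rewrite !red_coef; case: (mono_supp mo \in K). Qed.

Lemma supp_sub (mo1 mo2 : 'X_{1..m}) : mono_supp mo1 \subset mono_supp (mo1 + mo2)%MM.
Proof.
apply/subsetP => i; rewrite !inE mnmDE.
by case: (mo1 i).
Qed.

Lemma red_mul p q : red (red p * q) = red (p * q).
Proof.
apply/mpolyP => mo; rewrite !red_coef; case: ifP => hmo //.
rewrite !mcoeffM; apply: eq_bigr => kk /eqP e.
rewrite red_coef; suff -> : mono_supp kk.1 \in K by [].
apply: (HK _ hmo); have -> : mono_supp mo = mono_supp (kk.1 + kk.2)%MM by rewrite -e.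
exact: supp_sub.
Qed.

Lemma red_mulr p q : red (p * red q) = red (p * q).
Proof. by rewrite mulrC red_mul mulrC. Qed.

Lemma kredE x J : kred K x J = red (x J).
Proof. by rewrite ffunE. Qed.
Lemma kredD x y : kred K (x + y) = kred K x + kred K y.
Proof. by apply/ffunP => J; rewrite !ffunE redD. Qed.
Lemma kredZ c x : kred K (c *: x) = c *: kred K x.
Proof. by apply/ffunP => J; rewrite !ffunE redZ. Qed.
Lemma kredN x : kred K (- x) = - kred K x.
Proof. by apply/ffunP => J; rewrite !ffunE redN. Qed.
Lemma kred0 : kred K (0 : KT) = 0.
Proof. by apply/ffunP => J; rewrite !ffunE red0. Qed.

Lemma kdE x : kd K x = kred K (kd0 x).
Proof. by []. Qed.
Lemma kmulE x y : kmul K x y = kred K (kmul0 x y).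
Proof. by []. Qed.

Lemma kred_kd0 x : kred K (kd0 (kred K x)) = kred K (kd0 x).
Proof.
apply/ffunP => L; rewrite !ffunE !red_sum; apply: eq_bigr => j _.
by rewrite !redZ ffunE red_mulr.
Qed.
Lemma kred_kmul0l x y : kred K (kmul0 (kred K x) y) = kred K (kmul0 x y).
Proof.
apply/ffunP => L; rewrite !ffunE !red_sum; apply: eq_bigr => J1 _.
rewrite !red_sum; apply: eq_bigr => J2 _.
by rewrite !redZ ffunE red_mul.
Qed.
Lemma kred_kmul0r x y : kred K (kmul0 x (kred K y)) = kred K (kmul0 x y).
Proof.
apply/ffunP => L; rewrite !ffunE !red_sum; apply: eq_bigr => J1 _.
rewrite !red_sum; apply: eq_bigr => J2 _.
by rewrite !redZ ffunE red_mulr.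
Qed.
Lemma kpar_kred x : kpar (kred K x) = kred K (kpar x).
Proof. by apply/ffunP => J; rewrite !ffunE redZ. Qed.

Lemma leib x y : kd K (kmul K x y) = kmul K (kd K x) y + kmul K (kpar x) (kd K y).
Proof.
by rewrite !kdE !kmulE kred_kd0 leib0 kredD kred_kmul0l kred_kmul0r.
Qed.

Lemma kd0_kpar x : kd0 (kpar x) = - kpar (kd0 x).
Proof.
apply/ffunP => L; rewrite !ffunE scaler_sumr -sumrN; apply: eq_bigr => j jL.
rewrite ffunE -scalerAr !scalerA cardsU1 jL /= exprS -scaleNr; congr (_ *: _).
by rewrite mulN1r mulrN mulrC.
Qed.

Lemma kd_kpar x : kd K (kpar x) = - kpar (kd K x).
Proof. by rewrite !kdE kd0_kpar kredN kpar_kred. Qed.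

Lemma kbarE x : kbar x = - kpar x.
Proof. by apply/ffunP => J; rewrite !ffunE exprS mulN1r scaleNr. Qed.

Lemma kmulDl x y z : kmul K (x + y) z = kmul K x z + kmul K y z.
Proof. by rewrite !kmulE kmul0Dl kredD. Qed.
Lemma kmulDr x y z : kmul K x (y + z) = kmul K x y + kmul K x z.
Proof. by rewrite !kmulE kmul0Dr kredD. Qed.
Lemma kmulNl x y : kmul K (- x) y = - kmul K x y.
Proof. by rewrite !kmulE -scaleN1r kmul0Zl kredZ scaleN1r. Qed.
Lemma kmulNr x y : kmul K x (- y) = - kmul K x y.
Proof. by rewrite !kmulE -scaleN1r kmul0Zr kredZ scaleN1r. Qed.
Lemma kmul0l y : kmul K 0 y = 0.
Proof. by rewrite kmulE kmul0_0l kred0. Qed.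
Lemma kparN x : kpar (- x) = - kpar x.
Proof. by apply/ffunP => J; rewrite !ffunE scalerN. Qed.
Lemma kparD' x y : kpar (x + y) = kpar x + kpar y.
Proof. exact: kparD. Qed.

End Red.

Definition mS m (S : {set 'I_m}) : 'X_{1..m} := [multinom ((i \in S) : nat) | i < m].

Lemma mS_supp m (S : {set 'I_m}) : mono_supp (mS S) = S.
Proof. by apply/setP => i; rewrite !inE mnmE; case: (i \in S). Qed.

Lemma mdeg_mS m (S : {set 'I_m}) : mdeg (mS S) = #|S|.
Proof.
rewrite mdegE -sum1_card [RHS]big_mkcond /=; apply: eq_bigr => i _.
by rewrite mnmE; case: (i \in S).
Qed.

Lemma mSD m (A B : {set 'I_m}) : [disjoint A & B] -> (mS A + mS B)%MM = mS (A :|: B).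
Proof.
move=> d; apply/mnmP => i; rewrite mnmDE !mnmE inE.
case iA: (i \in A) => //=; by rewrite (disjointFr d iA).
Qed.

Lemma mS1 m (S : {set 'I_m}) i : i \in S -> (U_(i) + mS (S :\ i))%MM = mS S.
Proof.
move=> iS; apply/mnmP => j; rewrite mnmDE !mnmE !inE.
case: (eqVneq j i) => [->|ne]; rewrite ?iS ?eqxx //=.
Qed.

Lemma coefXt m (k : comNzRingType) (t : 'I_m) (S : {set 'I_m}) (p : {mpoly k[m]}) :
  ('X_t * p)@_(mS S) = if t \in S then p@_(mS (S :\ t)) else 0.
Proof.
case: ifP => tS.
  by rewrite -(mS1 tS) mulrC mcoeffMX.
rewrite mcoeffM big1 // => kk /eqP e.
rewrite mcoeffX; case: eqP => [h|]; rewrite ?mul0r //.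
have := congr1 (fun mo : 'X_{1..m} => mo t) e.
by rewrite /= mnmDE -h mnm1E eqxx mnmE tS.
Qed.

Section Red2.
Variables (m : nat) (k : comNzRingType) (K : {set {set 'I_m}}).
Local Notation KT := (KT m k).
Local Notation red := (red_poly K).

Lemma red_X mo : red ('X_[mo] : {mpoly k[m]}) = if mono_supp mo \in K then 'X_[mo] else 0.
Proof.
apply/mpolyP => mo'; rewrite red_coef mcoeffX.
case: ifP => h; case: ifP => h'; rewrite ?mcoeff0 ?mcoeffX //.
all: try by case: eqP => // e; rewrite e h in h'.
Qed.

Lemma kred_single A (p : {mpoly k[m]}) : kred K (single A p) = single A (red p).
Proof. by apply/ffunP => L; rewrite !ffunE; case: ifP; rewrite ?red0. Qed.

Lemma single0 A : single A (0 : {mpoly k[m]}) = 0.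
Proof. by apply/ffunP => L; rewrite !ffunE; case: ifP. Qed.

Lemma xcycle (S : {set 'I_m}) i0 : i0 \in S -> S \notin K ->
  kd K (single [set i0] ('X_[mS (S :\ i0)] : {mpoly k[m]})) = 0.
Proof.
move=> iS SK; rewrite kdE kd0_single big_set1 -mpolyXD mS1 // kredZ kred_single red_X.
by rewrite mS_supp (negbTE SK) single0 scaler0.
Qed.

End Red2.

Lemma signN (k : pzRingType) X Y : odd X = ~~ odd Y -> (-1) ^+ X = - (-1) ^+ Y :> k.
Proof. by move=> h; rewrite (@sign_odd _ X Y.+1) ?exprS ?mulN1r // /= h. Qed.

Lemma asl m (k : comNzRingType) (S : {set 'I_m}) (G : 'I_m -> 'I_m -> k) :
  (forall a b, a \in S -> b \in S -> a != b -> G a b = - G b a) ->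
  \sum_(a in S) \sum_(b in S :\ a) G a b = 0.
Proof.
move=> hG.
pose H a b := if [&& a \in S, b \in S & a != b] then G a b else 0.
have HN a b : H a b = - H b a.
  rewrite /H; case: (boolP (a \in S)) => aS; case: (boolP (b \in S)) => bS /=;
    rewrite ?oppr0 //; case: eqP => [->|/eqP ne]; rewrite ?eqxx ?oppr0 //=.
  by rewrite eq_sym ne hG.
have -> : \sum_(a in S) \sum_(b in S :\ a) G a b = \sum_a \sum_b H a b.
  rewrite big_mkcond /=; apply: eq_bigr => a _.
  case: (boolP (a \in S)) => aS.
    rewrite big_mkcond /=; apply: eq_bigr => b _; rewrite /H !inE aS /= eq_sym.
    by rewrite andbC.
  by rewrite big1 // => b _; rewrite /H (negbTE aS).
have e1 : forall a, \sum_b H a b = \sum_(b : 'I_m) (if (b < a)%N then H a b else 0) +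
                                   \sum_(b : 'I_m) (if (a < b)%N then H a b else 0).
  move=> a; rewrite -big_split /=; apply: eq_bigr => b _.
  case: (ltngtP b a) => [//|//|e]; rewrite ?addr0 ?add0r //.
  have -> : b = a by apply: val_inj.
  by have := HN a a; rewrite /H eqxx /= !andbF.
under eq_bigr do rewrite e1.
rewrite big_split /= [X in _ + X]exchange_big /=.
rewrite -[X in _ + X]opprK -sumrN; apply/eqP; rewrite subr_eq0; apply/eqP.
apply: eq_bigr => a _; rewrite -sumrN; apply: eq_bigr => b _.
by case: ifP => _; rewrite ?oppr0 // HN opprK.
Qed.

Section Main.
Variables (m : nat) (k : comNzRingType) (K : {set {set 'I_m}}) (I J : {set 'I_m}).
Hypothesis HK : simplicial_complex K.
Hypothesis dIJ : [disjoint I & J].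
Hypothesis HU : full_sub K (I :|: J) = sc_join (bdry_simplex I) (bdry_simplex J).
Local Notation KT := (KT m k).
Local Notation red := (red_poly K).

Lemma face_join (s t : {set 'I_m}) : s \proper I -> t \proper J -> s :|: t \in K.
Proof.
move=> sI tJ.
have : s :|: t \in full_sub K (I :|: J).
  by rewrite HU; apply/imset2P; exists s t; rewrite ?inE.
by rewrite inE => /andP [].
Qed.

Lemma I_notK : I \notin K.
Proof.
apply/negP => IK.
have : I \in full_sub K (I :|: J) by rewrite inE IK subsetUl.
rewrite HU => /imset2P [s t]; rewrite !inE => sI tJ eI.
case/properP: sI => _ [x xI xs].
have : x \in s :|: t by rewrite -eI.
rewrite inE (negbTE xs) /= => xt.
have xJ : x \in J by apply: (subsetP (proper_sub tJ)).
by rewrite (disjointFr dIJ xI) in xJ.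
Qed.

Lemma J_notK : J \notin K.
Proof.
apply/negP => JK.
have : J \in full_sub K (I :|: J) by rewrite inE JK subsetUr.
rewrite HU => /imset2P [s t]; rewrite !inE => sI tJ eJ.
case/properP: tJ => _ [x xJ xt].
have : x \in s :|: t by rewrite -eJ.
rewrite inE (negbTE xt) orbF => xs.
have xI : x \in I by apply: (subsetP (proper_sub sI)).
by rewrite (disjointFr dIJ xI) in xJ.
Qed.

Lemma face2 i j : i \in I -> j \in J -> (I :|: J) :\: [set i; j] = (I :\ i) :|: (J :\ j).
Proof.
move=> iI jJ; apply/setP => x; rewrite !inE.
case: (eqVneq x i) => [->|xi]; first by rewrite (disjointFr dIJ iI) /= andbF.
case: (eqVneq x j) => [->|xj] /=; first by rewrite (disjointFl dIJ jJ).
by [].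
Qed.

Lemma face2K i j : i \in I -> j \in J -> (I :|: J) :\: [set i; j] \in K.
Proof. by move=> iI jJ; rewrite face2 // face_join // properD1. Qed.

Definition phi (z : KT) : k := \sum_(i in I) \sum_(j in J)
  ksgn k [set i] [set j] * (z [set i; j])@_(mS ((I :|: J) :\: [set i; j])).

Lemma phiD z1 z2 : phi (z1 + z2) = phi z1 + phi z2.
Proof.
rewrite /phi -big_split; apply: eq_bigr => i _; rewrite -big_split; apply: eq_bigr => j _.
by rewrite ffunE mcoeffD mulrDr.
Qed.
Lemma phiN z : phi (- z) = - phi z.
Proof.
rewrite /phi -sumrN; apply: eq_bigr => i _; rewrite -sumrN; apply: eq_bigr => j _.
by rewrite ffunE mcoeffN mulrN.
Qed.


Local Notation U := (I :|: J).
Definition C (w : KT) (T : {set 'I_m}) := (w T)@_(mS (U :\: T)).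
Definition G1 (w : KT) i j t := ksgn k [set i] [set j] * (sg k [set i; j] t * C w (t |: [set i; j])).

Lemma coef_kd w i j : i \in I -> j \in J ->
  ksgn k [set i] [set j] * (kd K w [set i; j])@_(mS (U :\: [set i; j])) =
  \sum_(t in I :\ i) G1 w i j t + \sum_(t in J :\ j) G1 w i j t.
Proof.
move=> iI jJ; rewrite kdE ffunE red_coef mS_supp face2K // ffunE.
rewrite (big_morph (mcoeff _) (@mcoeffD _ _ _) (@mcoeff0 _ _ _)).
have dd : [disjoint I :\ i & J :\ j].
  by apply: (disjointWl (subsetDl _ _)); apply: (disjointWr (subsetDl _ _)).
rewrite /G1 -!mulr_sumr -mulrDr -bigU //; congr (_ * _).
rewrite big_mkcond [RHS]big_mkcond /=; apply: eq_bigr => t _.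
have E : (t \in [predU I :\ i & J :\ j]) = (t \in U :\: [set i; j]).
  by rewrite (face2 iI jJ) [RHS]inE.
rewrite E mcoeffZ coefXt.
case: (boolP (t \in U :\: [set i; j])) => tS.
  have tL : t \notin [set i; j] by move: tS; rewrite inE => /andP [].
  by rewrite tL /C /sg setDDl (setUC [set i; j] [set t]).
by case: (t \notin _); rewrite ?mulr0.
Qed.

Lemma anti1 w i t j : i \in I -> t \in I -> i != t -> j \in J -> G1 w i j t = - G1 w t j i.
Proof.
move=> iI tI it jJ.
have ij : i != j by apply: contraTneq jJ => <-; rewrite (disjointFr dIJ iI).
have tj : t != j by apply: contraTneq jJ => <-; rewrite (disjointFr dIJ tI).
rewrite /G1 setUCA !mulrA -mulNr; congr (_ * _).
rewrite !ksgnE !sgE !cntUr ?disjoints1 ?in_set1 // -!exprD; apply: signN.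
have h1 := @cnt1lr m i [set t]; rewrite cards1 in_set1 it in h1.
move: (congr1 odd (h1 isT)); rewrite !oddD /=.
by repeat (match goal with |- context[odd ?n] => case: (odd n) end).
Qed.

Lemma anti2 w i j t : i \in I -> j \in J -> t \in J -> j != t -> G1 w i j t = - G1 w i t j.
Proof.
move=> iI jJ tJ jt.
have ij : i != j by apply: contraTneq jJ => <-; rewrite (disjointFr dIJ iI).
have it : i != t by apply: contraTneq tJ => <-; rewrite (disjointFr dIJ iI).
rewrite /G1.
have -> : t |: [set i; j] = j |: [set i; t].
  by apply/setP => x; rewrite !inE; case: (x == i); case: (x == j); case: (x == t).
rewrite !mulrA -mulNr; congr (_ * _).
rewrite !ksgnE !sgE !cntUr ?disjoints1 ?in_set1 // -!exprD; apply: signN.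
have h1 := @cnt1lr m i [set t]; rewrite cards1 in_set1 it in h1.
have h2 := @cnt1lr m i [set j]; rewrite cards1 in_set1 ij in h2.
have h3 := @cnt1lr m j [set t]; rewrite cards1 in_set1 jt in h3.
move: (congr1 odd (h1 isT)) (congr1 odd (h2 isT)) (congr1 odd (h3 isT)); rewrite !oddD /=.
by repeat (match goal with |- context[odd ?n] => case: (odd n) end).
Qed.

Lemma phi_kd w : phi (kd K w) = 0.
Proof.
rewrite /phi.
transitivity (\sum_(i in I) \sum_(j in J)
   (\sum_(t in I :\ i) G1 w i j t + \sum_(t in J :\ j) G1 w i j t)).
  by apply: eq_bigr => i iI; apply: eq_bigr => j jJ; rewrite coef_kd.
under eq_bigr do rewrite big_split /=.
rewrite big_split /= exchange_big /= big1 ?add0r.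
  apply: big1 => i iI; apply: asl => a b aJ bJ ab; exact: anti2.
move=> j jJ; apply: asl => a b aI bI ab; exact: anti1.
Qed.

Lemma pair_neq i j i0 j0 : i \in I -> j \in J -> i0 \in I -> j0 \in J ->
  ([set i; j] == [set i0; j0]) = (i == i0) && (j == j0).
Proof.
move=> iI jJ i0I j0J; apply/eqP/andP => [e|[/eqP -> /eqP ->] //].
have : i \in [set i0; j0] by rewrite -e set21.
rewrite !inE => /orP [/eqP ii0|/eqP ij0]; last first.
  by move: j0J; rewrite -ij0 (disjointFr dIJ iI).
have : j \in [set i0; j0] by rewrite -e set22.
rewrite !inE => /orP [/eqP ji0|/eqP jj0].
  by move: jJ; rewrite ji0 (disjointFr dIJ i0I).
by rewrite ii0 jj0.
Qed.

Lemma phi_prod i0 j0 : i0 \in I -> j0 \in J ->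
  phi (kmul K (single [set i0] ('X_[mS (I :\ i0)] : {mpoly k[m]}))
              (single [set j0] 'X_[mS (J :\ j0)])) = 1.
Proof.
move=> i0I j0J.
have ij : i0 != j0 by apply: contraTneq j0J => <-; rewrite (disjointFr dIJ i0I).
have dd : [disjoint I :\ i0 & J :\ j0].
  by apply: (disjointWl (subsetDl _ _)); apply: (disjointWr (subsetDl _ _)).
rewrite kmulE kmul0_single disjoints1 in_set1 ij kredZ kred_single -mpolyXD mSD //.
rewrite red_X mS_supp face_join ?properD1 //.
rewrite /phi (bigD1 i0) //= [X in _ + X]big1 ?addr0; last first.
  move=> i /andP [iI ne]; apply: big1 => j jJ.
  by rewrite !ffunE pair_neq // (negbTE ne) /= scaler0 mcoeff0 mulr0.
rewrite (bigD1 j0) //= big1 ?addr0; last first.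
  move=> j /andP [jJ ne].
  by rewrite !ffunE pair_neq // eqxx (negbTE ne) /= scaler0 mcoeff0 mulr0.
rewrite !ffunE eqxx mcoeffZ mcoeffX face2 // eqxx mulr1.
by rewrite ksgnE -exprD (@sign_odd _ _ 0) // oddD addbb.
Qed.

End Main.

Lemma kmul0r m (k : comNzRingType) (K : {set {set 'I_m}}) (x : KT m k) : kmul K x 0 = 0.
Proof. by rewrite kmulE kmul0_0r kred0. Qed.

Theorem lemma2p4 (m : nat) (K : {set {set 'I_m}}) (I J : {set 'I_m}) :
  simplicial_complex K ->
  I != set0 -> J != set0 -> [disjoint I & J] ->
  full_sub K (I :|: J) = sc_join (bdry_simplex I) (bdry_simplex J) ->
  forall k : comNzRingType, ~ golod k K.
Proof.
move=> HK I0 J0 dIJ HU k Hg.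
have [i0 i0I] := set0Pn _ I0; have [j0 j0J] := set0Pn _ J0.
pose xI := single [set i0] ('X_[mS (I :\ i0)] : {mpoly k[m]}).
pose xJ := single [set j0] ('X_[mS (J :\ j0)] : {mpoly k[m]}).
have IK := I_notK dIJ HU; have JK := J_notK dIJ HU.
have cI : kd K xI = 0 by apply: xcycle.
have cJ : kd K xJ = 0 by apply: xcycle.
have rI : kreduced K xI.
  rewrite /kreduced kred_single red_X mS_supp.
  have f : I :\ i0 \in K by rewrite -[I :\ i0]setU0 (face_join HU) ?properD1 ?proper0.
  by rewrite f.
have rJ : kreduced K xJ.
  rewrite /kreduced kred_single red_X mS_supp.
  have f : J :\ j0 \in K by rewrite -[J :\ j0]set0U (face_join HU) ?properD1 ?proper0.
  by rewrite f.
have hI : khomog (2 * #|I|).-1 xI.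
  move=> L mo; rewrite ffunE; case: eqP => [->|_].
    rewrite msuppX inE => /eqP ->; rewrite mdeg_mS cards1 (cardsD1 i0 I) i0I.
    by rewrite add1n mulnS addSn.
  by rewrite mcoeff_msupp mcoeff0 eqxx.
have hJ : khomog (2 * #|J|).-1 xJ.
  move=> L mo; rewrite ffunE; case: eqP => [->|_].
    rewrite msuppX inE => /eqP ->; rewrite mdeg_mS cards1 (cardsD1 j0 J) j0J.
    by rewrite add1n mulnS addSn.
  by rewrite mcoeff_msupp mcoeff0 eqxx.
pose deg n := if n == 0%N then (2 * #|I|).-1 else (2 * #|J|).-1.
pose a i j := if (i == 0%N) && (j == 0%N) then xI
              else if (i == 1%N) && (j == 1%N) then xJ else 0.
have hds : defining_system K 2 deg a.
  split.
    case=> [|[|//]] _; rewrite /deg /a /=; split => //.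
      by rewrite (cardsD1 i0 I) i0I add1n mulnS addSn.
    by rewrite (cardsD1 j0 J) j0J add1n mulnS addSn.
  move=> i j hij hj ne.
  case: j hj hij ne => [|[|j]] // _.
    case: i => [|i] // _ _; rewrite /a /=; split => //.
    by rewrite /dsdeg big_nat1 subnn subn0 /=.
  case: i => [|[|i]] // _ _.
  rewrite /a /=; split => //.
  by rewrite /dsdeg big_nat1 subnn subn0 /=.
have [b [hb hbb hm]] := Hg 2%N deg a isT hds.
have [y [_ ey]] := hbb 0%N isT.
have [y' [_ ey']] := hbb 1%N isT.
have [w [_ ew]] := hm.
have kd11 : kd K (b 1%N 1%N) = 0 by case: (hb.1 1%N isT).
have e0 : b 0%N 0%N = xI + kd K y by rewrite -ey /a /= addrC subrK.
have e1 : b 1%N 1%N = xJ + kd K y' by rewrite -ey' /a /= addrC subrK.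
have H1 : kmul K (kpar (kd K y)) (b 1%N 1%N) = - kd K (kmul K (kpar y) (b 1%N 1%N)).
  by rewrite leib // kd11 kmul0r addr0 kd_kpar kmulNl opprK.
have H2 : kmul K (kpar xI) (kd K y') = kd K (kmul K xI y').
  by rewrite leib // cI kmul0l add0r.
have kpI : kpar xI = - xI by rewrite kpar_single cards1 expr1 scaleN1r.
have := phi_kd dIJ HU w; rewrite -ew /massey_value /= big_nat1.
rewrite kbarE e0 kparD kmulNl kmulDl H1 e1 kmulDr H2 kpI kmulNl.
rewrite !phiN !phiD !phiN !(phi_kd dIJ HU) /xI /xJ (phi_prod k dIJ HU i0I j0J) !oppr0 !addr0 opprK.
by move/eqP; rewrite oner_eq0.
Qed.
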